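(* Let $I$ be a set of integers, let $n$ be a positive integer, and let $(a(i_0,\dots,i_n))_{i_0,\dots,i_n\in I}$ be a family of integers. Then there exists a family of integers $(x(i_0,\dots,i_{n-1}))_{i_0,\dots,i_{n-1}\in I}$ such that $$\sum_{j=0}^{n}(-1)^j\,x(i_0,\dots,\widehat{i_j},\dots,i_n)\equiv a(i_0,\dots,i_n)\pmod{(i_0,\dots,i_n)}\quad\text{for all } i_0,\dots,i_n\in I$$ if and only if $$\sum_{j=0}^{n+1}(-1)^j\,a(i_0,\dots,\widehat{i_j},\dots,i_{n+1})\equiv 0\pmod{(i_0,\dots,i_{n+1})}\quad\text{for all } i_0,\dots,i_{n+1}\in I.$$
   Context: For integers $i_0,\dots,i_m$, the notation $(i_0,\dots,i_m)$ denotes the ideal of $\mathbb{Z}$ generated by $i_0,\dots,i_m$, i.e. $\gcd(i_0,\dots,i_m)\mathbb{Z}$; a congruence modulo an ideal means the difference lies in that ideal. A hat $\widehat{i_j}$ means that the entry $i_j$ is omitted. *)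

(* Defs.v *)
From mathcomp Require Import all_boot all_order all_algebra.
Set Implicit Arguments. Unset Strict Implicit. Unset Printing Implicit Defensive.
Import Order.TTheory GRing.Theory Num.Theory.

Definition omit (n : nat) (t : n.+1.-tuple int) (j : 'I_n.+1) : n.-tuple int :=
  [tuple tnth t (lift j k) | k < n].

(* gcdt t : the nonnegative generator gcd(i_0, ..., i_m) of the ideal
   (i_0, ..., i_m) of Z (gcd of the empty family / all zeros is 0). *)
Definition gcdt (m : nat) (t : m.-tuple int) : int := foldr gcdz 0%R t.

Definition allin (I : pred int) (m : nat) (t : m.-tuple int) : Prop :=
  forall k : 'I_m, I (tnth t k).

(* Main.v *)
Require Import Defs.
From mathcomp Require Import all_boot all_order all_algebra zify ring lra.
From Stdlib Require Import Classical ClassicalEpsilon.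
Import Order.TTheory GRing.Theory Num.Theory.
Local Open Scope ring_scope.
Set Implicit Arguments. Unset Strict Implicit.

Lemma tnth_omit n (t : n.+1.-tuple int) j k : tnth (omit t j) k = tnth t (lift j k).
Proof. by rewrite /omit tnth_map tnth_ord_tuple. Qed.

Lemma omit_cons0 k (p : int) (t : k.+1.-tuple int) : omit (cons_tuple p t) ord0 = t.
Proof.
apply: eq_from_tnth => i; rewrite tnth_omit !(tnth_nth 0) /=.
by [].
Qed.

Lemma omit_consS k (p : int) (t : k.+1.-tuple int) (j : 'I_k.+1) :
  omit (cons_tuple p t) (lift ord0 j) = cons_tuple p (omit t j).
Proof.
apply: eq_from_tnth => i; rewrite tnth_omit !(tnth_nth 0) /=.
case: i => [[|i] hi] /=.
  by [].
rewrite /bump /= add1n ltnS.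
have hi' : (i < k)%N by [].
rewrite (nth_map (Ordinal hi')) ?size_enum_ord // (tnth_nth 0) /= nth_enum_ord // /bump.
by case: leqP.
Qed.

Lemma cone k (b : k.+1.-tuple int -> int) (p : int) (t : k.+1.-tuple int) :
  \sum_(j < k.+2) (-1) ^+ j * b (omit (cons_tuple p t) j)
  = b t - \sum_(j < k.+1) (-1) ^+ j * b (cons_tuple p (omit t j)).
Proof.
rewrite big_ord_recl omit_cons0 expr0 mul1r; congr (_ + _).
rewrite -sumrN; apply: eq_bigr => j _.
by rewrite omit_consS /= exprS mulN1r mulNr.
Qed.

Lemma gcds_dvd (s : seq int) x : x \in s -> (foldr gcdz 0 s %| x)%Z.
Proof.
elim: s => //= y s IH; rewrite in_cons => /orP [/eqP -> | /IH h].
  exact: dvdz_gcdl.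
exact: dvdz_trans (dvdz_gcdr _ _) h.
Qed.

Lemma gcds_greatest (s : seq int) d : (forall x, x \in s -> (d %| x)%Z) -> (d %| foldr gcdz 0 s)%Z.
Proof.
elim: s => [|y s IH] h /=; first exact: dvdz0.
rewrite dvdz_gcd h ?mem_head //=.
by apply: IH => x hx; apply: h; rewrite in_cons hx orbT.
Qed.

Lemma gcdt_dvd m (t : m.-tuple int) k : (gcdt t %| tnth t k)%Z.
Proof. exact/gcds_dvd/mem_tnth. Qed.

Lemma gcdt_greatest m (t : m.-tuple int) d : (forall k, (d %| tnth t k)%Z) -> (d %| gcdt t)%Z.
Proof. by move=> h; apply: gcds_greatest => x /tnthP [k ->]. Qed.

Lemma gcdt_omit n (t : n.+1.-tuple int) j : (gcdt t %| gcdt (omit t j))%Z.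
Proof. by apply: gcdt_greatest => k; rewrite tnth_omit gcdt_dvd. Qed.

Lemma gcdt_ge0 m (t : m.-tuple int) : 0 <= gcdt t.
Proof. by rewrite /gcdt; case: (val t) => //= y s. Qed.

Lemma gcdt_cons m p (t : m.-tuple int) : gcdt (cons_tuple p t) = gcdz p (gcdt t).
Proof. by []. Qed.

Lemma allin_omit (I : pred int) n (t : n.+1.-tuple int) j : allin I t -> allin I (omit t j).
Proof. by move=> h k; rewrite tnth_omit. Qed.

Lemma allin_cons (I : pred int) m p (t : m.-tuple int) : I p -> allin I t -> allin I (cons_tuple p t).
Proof.
move=> hp ht k; rewrite (tnth_nth 0); case: k => [[|i] hi] //=.
have hi' : (i < m)%N by [].
by have := ht (Ordinal hi'); rewrite (tnth_nth 0).
Qed.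
Lemma omit_omit m (t : m.+2.-tuple int) (a b : 'I_m.+1) : (b <= a)%N ->
  omit (omit t (lift ord0 a)) b = omit (omit t (widen_ord (leqnSn _) b)) a.
Proof.
move=> ba; apply: eq_from_tnth => k; rewrite !tnth_omit; congr tnth.
apply: val_inj; rewrite /= /bump.
have := ltn_ord k; have := ltn_ord a.
do ! case: leqP => ? /=; lia.
Qed.

Lemma dd0 m (t : m.+2.-tuple int) (f : m.-tuple int -> int) :
  \sum_(j < m.+2) (-1) ^+ j * \sum_(k < m.+1) (-1) ^+ k * f (omit (omit t j) k) = 0.
Proof.
set F := fun (j : 'I_m.+2) (k : 'I_m.+1) => (-1) ^+ (j + k) * f (omit (omit t j) k).
have -> : \sum_(j < m.+2) (-1) ^+ j * \sum_(k < m.+1) (-1) ^+ k * f (omit (omit t j) k)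
   = \sum_(j < m.+2) \sum_(k < m.+1) ((if (k < j)%N then F j k else 0) + (if (j <= k)%N then F j k else 0)).
  apply: eq_bigr => j _; rewrite mulr_sumr; apply: eq_bigr => k _.
  rewrite /F exprD mulrA; case: (ltnP k j) => h; rewrite ?addr0 ?add0r //.
have -> : \sum_(j < m.+2) \sum_(k < m.+1) ((if (k < j)%N then F j k else 0) + (if (j <= k)%N then F j k else 0))
   = \sum_(j < m.+2) \sum_(k < m.+1) (if (k < j)%N then F j k else 0)
   + \sum_(j < m.+2) \sum_(k < m.+1) (if (j <= k)%N then F j k else 0).
  by rewrite -big_split; apply: eq_bigr => j _; rewrite -big_split.
rewrite big_ord_recl big1 ?add0r; last by move=> k _.
rewrite [X in _ + X]big_ord_recr /= [X in _ + (_ + X)]big1 ?addr0; last first.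
  by move=> k _; rewrite /= leqNgt ltn_ord.
rewrite [X in _ + X]exchange_big /= -big_split big1 //= => a _.
rewrite -big_split big1 //= => b _.
rewrite /bump leq0n add1n ltnS.
case: (leqP b a) => ba /=; last by rewrite addr0.
rewrite /F omit_omit // lift0 /= addSn exprS mulN1r addnC mulNr addNr.
by [].
Qed.

Definition dl k (f : k.-tuple int -> int) (t : k.+1.-tuple int) : int :=
  \sum_(j < k.+1) (-1) ^+ j * f (omit t j).
Arguments dl {k} f t.

Lemma dl_sum_dvd k (f : k.-tuple int -> int) (t : k.+1.-tuple int) d :
  (forall j, (d %| f (omit t j))%Z) -> (d %| dl f t)%Z.
Proof. by move=> h; apply: rpred_sum => j _; apply: dvdz_mull. Qed.

Lemma dlB k (f g : k.-tuple int -> int) t : dl f t - dl g t = dl (fun s => f s - g s) t.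
Proof. by rewrite /dl -sumrB; apply: eq_bigr => j _; rewrite mulrBr. Qed.

Lemma dlD k (f g : k.-tuple int -> int) t : dl f t + dl g t = dl (fun s => f s + g s) t.
Proof. by rewrite /dl -big_split; apply: eq_bigr => j _; rewrite mulrDr. Qed.

Lemma dldl m (t : m.+2.-tuple int) (f : m.-tuple int -> int) : dl (dl f) t = 0.
Proof. exact: dd0. Qed.

Lemma dir1 (I : pred int) (n : nat) (a : n.+1.-tuple int -> int) (x : n.-tuple int -> int) :
  (forall t : n.+1.-tuple int, allin I t ->
       (\sum_(j < n.+1) (-1) ^+ j * x (omit t j) == a t %[mod gcdt t])%Z) ->
  (forall t : n.+2.-tuple int, allin I t ->
     (\sum_(j < n.+2) (-1) ^+ j * a (omit t j) == 0 %[mod gcdt t])%Z).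
Proof.
move=> H t ht; rewrite eqz_mod_dvd subr0.
have -> : \sum_(j < n.+2) (-1) ^+ j * a (omit t j) = dl a t - dl (dl x) t.
  by rewrite dldl subr0.
rewrite dlB; apply: dl_sum_dvd => j.
apply: (dvdz_trans (gcdt_omit t j)) => /=.
have := H _ (allin_omit j ht); rewrite eqz_mod_dvd -rpredN opprB.
by [].
Qed.

Definition Wf k (a : k.+2.-tuple int -> int) (P : nat -> int) m (r : k.-tuple int) : int :=
  \sum_(i < m) a (cons_tuple (P i) (cons_tuple (P i.+1) r)).
Definition zf k (a : k.+2.-tuple int -> int) (P : nat -> int) m (s : k.+1.-tuple int) : int :=
  a (cons_tuple (P m) s) + dl (Wf a P m) s.

Lemma Z1 k (a : k.+2.-tuple int -> int) P m (t : k.+2.-tuple int) :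
  dl (zf a P m) t = dl (fun s => a (cons_tuple (P m) s)) t.
Proof.
by rewrite -[RHS]addr0 -(dldl t (Wf a P m)) dlD.
Qed.

Lemma Z2 k (a : k.+2.-tuple int -> int) P m (s : k.+1.-tuple int) :
  zf a P m.+1 s - zf a P m s = dl a (cons_tuple (P m) (cons_tuple (P m.+1) s)).
Proof.
rewrite /dl cone.
have := cone (fun r => a (cons_tuple (P m) r)) (P m.+1) s; rewrite /= => ->.
rewrite /zf.
have -> : dl (Wf a P m.+1) s = dl (Wf a P m) s + dl (fun r => a (cons_tuple (P m) (cons_tuple (P m.+1) r))) s.
  rewrite dlD; apply: eq_bigr => j _; congr (_ * _).
  by rewrite /Wf big_ord_recr.
rewrite /dl; set A := \sum_(_ < _) _; set B := \sum_(_ < _) _.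
ring.
Qed.

Definition pp (l e : nat) : int := Posz (l ^ e)%N.

Definition goodP (I : pred int) (l : nat) (P : nat -> int) :=
  forall m, I (P m) /\ forall i, I i -> forall e, (e <= m)%N -> (pp l e %| i)%Z -> (pp l e %| P m)%Z.

Definition cocyc (I : pred int) k (a : k.+2.-tuple int -> int) :=
  forall T : k.+3.-tuple int, allin I T -> (gcdt T %| dl a T)%Z.

Lemma Z3 (I : pred int) k (a : k.+2.-tuple int -> int) P l :
  cocyc I a -> goodP I l P -> forall (s : k.+1.-tuple int) e, allin I s ->
  (pp l e %| gcdt s)%Z -> forall d, (pp l e %| zf a P (e + d) s - zf a P e s)%Z.
Proof.
move=> C HP s e hs he.
have hs0 : (pp l e %| tnth s ord0)%Z := dvdz_trans he (gcdt_dvd s ord0).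
elim=> [|d IH]; first by rewrite addn0 subrr dvdz0.
have -> : zf a P (e + d.+1) s - zf a P e s
   = (zf a P (e + d).+1 s - zf a P (e + d) s) + (zf a P (e + d) s - zf a P e s).
  by rewrite addnS; ring.
apply: rpredD => //; rewrite Z2.
apply: dvdz_trans (C _ _); last first.
  by apply: allin_cons; [case: (HP (e + d)%N) | apply: allin_cons; [case: (HP (e + d).+1) | ]].
rewrite !gcdt_cons !dvdz_gcd he andbT.
apply/andP; split.
  by case: (HP (e + d)%N) => _ h; apply: h (hs ord0) _ _ hs0; rewrite leq_addr.
by case: (HP (e + d).+1) => _ h; apply: h (hs ord0) _ _ hs0; rewrite ltnW // ltnS leq_addr.
Qed.

Lemma gcdt_gt0 (I : pred int) m (s : m.+1.-tuple int) :
  (forall i, I i -> i != 0) -> allin I s -> (0 < `|gcdt s|)%N.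
Proof.
move=> hnz hs; rewrite absz_gt0; apply/negP => /eqP h0.
have := gcdt_dvd s ord0; rewrite h0 dvd0z => /eqP h1.
by have := hnz _ (hs ord0); rewrite h1.
Qed.

Lemma pp_dvd_gcdt l m (s : m.-tuple int) : (pp l (logn l `|gcdt s|) %| gcdt s)%Z.
Proof. by rewrite dvdzE /pp /= pfactor_dvdnn. Qed.

Lemma Z4 (I : pred int) k (a : k.+2.-tuple int -> int) P l :
  cocyc I a -> goodP I l P -> prime l -> (forall i, I i -> i != 0) ->
  forall t : k.+2.-tuple int, allin I t ->
  (pp l (logn l `|gcdt t|) %| dl (fun s => zf a P (logn l `|gcdt s|) s) t - a t)%Z.
Proof.
move=> C HP hl hnz t ht.
set e := logn l `|gcdt t|.
have hdt : (pp l e %| gcdt t)%Z := pp_dvd_gcdt l t.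
have -> : dl (fun s => zf a P (logn l `|gcdt s|) s) t - a t
   = dl (fun s => zf a P (logn l `|gcdt s|) s - zf a P e s) t + (dl (zf a P e) t - a t).
  by rewrite -dlB; ring.
apply: rpredD.
  apply: dl_sum_dvd => j /=.
  have hs := allin_omit j ht.
  have hes : (pp l e %| gcdt (omit t j))%Z := dvdz_trans hdt (gcdt_omit t j).
  have Kge : (e <= logn l `|gcdt (omit t j)|)%N.
    apply: dvdn_leq_log; first exact: gcdt_gt0 hnz hs.
    by have := gcdt_omit t j; rewrite dvdzE.
  rewrite -(subnKC Kge); exact: (Z3 C HP hs hes).
rewrite Z1.
have h : dl a (cons_tuple (P e) t) = a t - dl (fun s => a (cons_tuple (P e) s)) t := cone a (P e) t.
have -> : dl (fun s => a (cons_tuple (P e) s)) t - a t = - dl a (cons_tuple (P e) t).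
  by rewrite h opprB.
rewrite rpredN; apply: dvdz_trans (C _ _); last first.
  by apply: allin_cons => //; case: (HP e).
rewrite gcdt_cons dvdz_gcd hdt andbT.
case: (HP e) => _ hh; apply: hh (ht ord0) _ _ _ => //.
exact: dvdz_trans hdt (gcdt_dvd t ord0).
Qed.

Lemma partdiv (G : nat) (y : int) : (0 < G)%N ->
  (forall l, prime l -> (pp l (logn l G) %| y)%Z) -> (Posz G %| y)%Z.
Proof.
move=> G0 h; rewrite dvdzE /=; apply/(dvdn_partP _ G0) => p hp.
have pp_ : prime p by move: hp; rewrite /= mem_primes => /and3P [].
by rewrite p_part; have := h p pp_; rewrite dvdzE.
Qed.

Lemma crt (G : nat) (f : nat -> int) : (0 < G)%N ->
  exists y : int, forall l, prime l -> (pp l (logn l G) %| y - f l)%Z.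
Proof.
move=> G0.
suff H : forall r : seq nat, all prime r -> exists y (M : nat), [/\ (0 < M)%N,
   (forall l, l \in r -> (l ^ logn l G %| M)%N),
   (forall q, prime q -> q \notin r -> coprime q M) &
   (forall l, l \in r -> (pp l (logn l G) %| y - f l)%Z)].
  have [y [M [_ _ _ hy]]] := H (primes G) (all_prime_primes G).
  exists y => l hl; case: (boolP (l \in primes G)) => h; first exact: hy.
  rewrite -logn_gt0 lt0n negbK in h; rewrite (eqP h) /pp expn0; exact: dvd1z.
elim=> [|l r IH] /=.
  by move=> _; exists 0, 1%N; split => // q _ _; exact: coprimen1.
case/andP=> pl ar; have [y [M [M0 hM hco hy]]] := IH ar.
case: (boolP (l \in r)) => lr.
  exists y, M; split => //.
  - by move=> l'; rewrite in_cons => /orP [/eqP -> |]; [apply: hM | apply: hM].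
  - by move=> q pq; rewrite in_cons negb_or => /andP [_]; apply: hco.
  - by move=> l'; rewrite in_cons => /orP [/eqP -> |]; [apply: hy | apply: hy].
set E := (l ^ logn l G)%N.
have cEM : coprime E M by apply: coprimeXl; apply: hco.
have cEMz : coprimez (Posz E) (Posz M) by rewrite coprimezE.
exists (zchinese (Posz E) (Posz M) (f l) y), (E * M)%N; split.
- by rewrite muln_gt0 M0 expn_gt0 prime_gt0.
- move=> l'; rewrite in_cons => /orP [/eqP -> | h]; first exact: dvdn_mulr.
  by apply: dvdn_mull; apply: hM.
- move=> q pq; rewrite in_cons negb_or => /andP [ql qr].
  rewrite coprimeMr hco // andbT; apply: coprimeXr.
  by rewrite prime_coprime // dvdn_prime2.
- move=> l'; rewrite in_cons => /orP [/eqP -> | h].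
    by rewrite -eqz_mod_dvd; apply/eqP; exact: zchinese_modl.
  have -> : zchinese (Posz E) (Posz M) (f l) y - f l'
     = (zchinese (Posz E) (Posz M) (f l) y - y) + (y - f l') by ring.
  apply: rpredD; last exact: hy.
  apply: (@dvdz_trans (Posz M)); first by rewrite dvdzE /=; apply: hM.
  by rewrite -eqz_mod_dvd; apply/eqP; exact: zchinese_modr.
Qed.

Lemma exP (I : pred int) l i0 : I i0 -> forall m, exists p, I p /\
  forall i, I i -> forall e, (e <= m)%N -> (pp l e %| i)%Z -> (pp l e %| p)%Z.
Proof.
move=> hi0; elim=> [|m [p [hp IH]]].
  exists i0; split => // i _ e; rewrite leqn0 => /eqP -> _; rewrite /pp expn0; exact: dvd1z.
case: (classic (exists q, I q /\ (pp l m.+1 %| q)%Z)) => [[q [hq hdq]] | hno].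
  exists q; split => // i _ e he _; apply: dvdz_trans hdq; rewrite dvdzE /=.
  exact: dvdn_exp2l.
exists p; split => // i hi e; rewrite leq_eqVlt => /orP [/eqP -> hd | he hd].
  by exfalso; apply: hno; exists i.
exact: IH hi e he hd.
Qed.

Lemma logn_omit (I : pred int) l k (t : k.+2.-tuple int) j :
  (forall i, I i -> i != 0) -> allin I t ->
  (logn l `|gcdt t| <= logn l `|gcdt (omit t j)|)%N.
Proof.
move=> hnz ht; apply: dvdn_leq_log; first exact: gcdt_gt0 hnz (allin_omit j ht).
by have := gcdt_omit t j; rewrite dvdzE.
Qed.

Lemma dir2 (I : pred int) k (a : k.+2.-tuple int -> int) :
  cocyc I a -> exists x : k.+1.-tuple int -> int,
     forall t : k.+2.-tuple int, allin I t -> (gcdt t %| dl x t - a t)%Z.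
Proof.
move=> C.
case: (boolP (I 0)) => I0.
  exists (fun s => a (cons_tuple 0 s)) => t ht.
  have h : dl a (cons_tuple 0 t) = a t - dl (fun s => a (cons_tuple 0 s)) t := cone a 0 t.
  have -> : dl (fun s => a (cons_tuple 0 s)) t - a t = - dl a (cons_tuple 0 t).
    by rewrite h opprB.
  rewrite rpredN; have := C _ (allin_cons I0 ht); rewrite gcdt_cons gcd0z.
  by rewrite !dvdzE.
have hnz : forall i, I i -> i != 0.
  by move=> i hi; apply/negP => /eqP hi0; move: I0; rewrite -hi0 hi.
case: (classic (exists i0, I i0)) => [[i0 hi0] | hno]; last first.
  by exists (fun _ => 0) => t ht; exfalso; apply: hno; exists (tnth t ord0).
have hP : forall l, exists P, goodP I l P.
  move=> l; exists (fun m => proj1_sig (constructive_indefinite_description _ (exP l hi0 m))).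
  by move=> m; exact: (proj2_sig (constructive_indefinite_description _ (exP l hi0 m))).
pose P l := proj1_sig (constructive_indefinite_description _ (hP l)).
have HP : forall l, goodP I l (P l) := fun l => proj2_sig (constructive_indefinite_description _ (hP l)).
pose xl l (s : k.+1.-tuple int) := zf a (P l) (logn l `|gcdt s|) s.
have hX : forall s : k.+1.-tuple int, exists y : int, (0 < `|gcdt s|)%N ->
    forall l, prime l -> (pp l (logn l `|gcdt s|) %| y - xl l s)%Z.
  move=> s; case: (posnP `|gcdt s|) => hs.
    by exists 0; rewrite hs.
  by have [y hy] := crt (fun l => xl l s) hs; exists y => _.
pose X s := proj1_sig (constructive_indefinite_description _ (hX s)).
have HX : forall s, _ := fun s => proj2_sig (constructive_indefinite_description _ (hX s)).
exists X => t ht.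
have G0 := gcdt_gt0 hnz ht.
have -> : gcdt t = Posz `|gcdt t| by rewrite abszE ger0_norm // gcdt_ge0.
apply: partdiv => // l hl.
have -> : dl X t - a t = dl (fun s => X s - xl l s) t + (dl (xl l) t - a t).
  by rewrite -dlB; ring.
apply: rpredD; last exact: (Z4 C (HP l) hl hnz ht).
apply: dl_sum_dvd => j /=.
apply: (@dvdz_trans (pp l (logn l `|gcdt (omit t j)|))).
  by rewrite dvdzE /=; apply: dvdn_exp2l; exact: logn_omit hnz ht.
apply: (HX (omit t j)) => //; exact: gcdt_gt0 hnz (allin_omit j ht).
Qed.

Unset Implicit Arguments.

Theorem theorem2 (I : pred int) (n : nat) (a : n.+1.-tuple int -> int) :
  (0 < n)%N ->
  (exists x : n.-tuple int -> int,
     forall t : n.+1.-tuple int, allin I t ->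
       (\sum_(j < n.+1) (-1) ^+ j * x (omit t j) == a t %[mod gcdt t])%Z)
  <->
  (forall t : n.+2.-tuple int, allin I t ->
     (\sum_(j < n.+2) (-1) ^+ j * a (omit t j) == 0 %[mod gcdt t])%Z).
Proof.
move=> n0; split.
  by case=> x H; exact: dir1 H.
move: a n0; case: n => [|k] a // _ H.
have C : cocyc I a by move=> T hT; have := H T hT; rewrite eqz_mod_dvd subr0.
have [x hx] := dir2 C.
by exists x => t ht; rewrite eqz_mod_dvd; exact: hx t ht.
Qed.
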